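(* Let $\mathcal{H}$ be a Hilbert space of dimension $d\ge 3$ with a fixed orthonormal basis, and for an operator $U$ let $U^*$ denote its entrywise complex conjugate in that basis. Then there is no triple $(\epsilon,\mathcal{E},\mathcal{D})$ consisting of a number $\epsilon>0$, a finite-dimensional ancillary Hilbert space $\mathcal{H}_A$, and completely positive trace non-increasing maps $\mathcal{E}:\mathcal{B}(\mathcal{H})\to\mathcal{B}(\mathcal{H}\otimes\mathcal{H}_A)$ and $\mathcal{D}:\mathcal{B}(\mathcal{H}\otimes\mathcal{H}_A)\to\mathcal{B}(\mathcal{H})$ such that for every unitary $U$ on $\mathcal{H}$ and every density operator $\rho$ on $\mathcal{H}$, $$0<\epsilon\le\operatorname{tr}\big[\mathcal{D}\circ(\mathcal{U}_U\otimes\mathrm{id}_{\mathcal{H}_A})\circ\mathcal{E}(\rho)\big]\quad\text{and}\quad \mathcal{D}\circ(\mathcal{U}_U\otimes\mathrm{id}_{\mathcal{H}_A})\circ\mathcal{E}(\rho)\propto U^*\rho\,U^{*\dagger},$$ where $\mathcal{U}_U(X)=UXU^\dagger$ acts on the $\mathcal{H}$ factor. *)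

(* Defs.v *)
(* complex numbers R[i] over a realType R (mathcomp-real-closed),
   operators as square matrices in the fixed orthonormal (standard) basis,
   Kronecker product [*t] from real_closed.mxtens (index (i,j) |-> i*n+j). *)
From HB Require Import structures.
From mathcomp Require Import all_boot all_order all_algebra.
From mathcomp Require Export reals complex mxtens spectral.
Set Implicit Arguments.
Unset Strict Implicit.
Unset Printing Implicit Defensive.
Import Order.TTheory GRing.Theory Num.Theory.
Local Open Scope ring_scope.

Section QuantumDefs.
Variable C : numClosedFieldType.

Definition entryconj m n (A : 'M[C]_(m, n)) : 'M[C]_(m, n) := map_mx Num.conj A.

Definition adjmx m n (A : 'M[C]_(m, n)) : 'M[C]_(n, m) := (entryconj A)^T.

Definition psdmx n (A : 'M[C]_n) : Prop :=
  forall v : 'cV[C]_n, 0 <= (adjmx v *m A *m v) 0 0.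

Definition density n (rho : 'M[C]_n) : Prop := psdmx rho /\ \tr rho = 1.

(* unitarity: the library's [U \is unitarymx] (spectral.v), U U^dagger = 1 *)

Definition blockmx k n (X : 'M[C]_(k * n)) (i j : 'I_k) : 'M[C]_n :=
  \matrix_(a, b) X (mxtens_index (i, a)) (mxtens_index (j, b)).

(* id_k (x) E applied to X = sum_{ij} E_ij (x) X_ij *)
Definition ampliate k n m (E : 'M[C]_n -> 'M[C]_m) (X : 'M[C]_(k * n))
  : 'M[C]_(k * m) :=
  \sum_(i < k) \sum_(j < k) (delta_mx i j *t E (blockmx X i j)).

Definition completely_positive n m (E : 'M[C]_n -> 'M[C]_m) : Prop :=
  forall k (X : 'M[C]_(k * n)), psdmx X -> psdmx (ampliate E X).

Definition trace_nonincreasing n m (E : 'M[C]_n -> 'M[C]_m) : Prop :=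
  forall X : 'M[C]_n, psdmx X -> \tr (E X) <= \tr X.

Definition cptni n m (E : 'M[C]_n -> 'M[C]_m) : Prop :=
  [/\ linear E, completely_positive E & trace_nonincreasing E].

End QuantumDefs.

(* Main.v *)
Require Import Defs.
From HB Require Import structures.
From mathcomp Require Import all_boot all_order all_algebra.
From mathcomp Require Import reals complex mxtens spectral.
Import Order.TTheory GRing.Theory Num.Theory.
Local Open Scope ring_scope.
From mathcomp Require Import ring.
Set Implicit Arguments.
Unset Strict Implicit.
Unset Printing Implicit Defensive.
Lemma adjmxE (C : numClosedFieldType) m n (A : 'M[C]_(m, n)) i j :
  adjmx A i j = (A j i)^*.
Proof. by rewrite /adjmx /entryconj !mxE. Qed.

Lemma adjmxM (C : numClosedFieldType) m n p (A : 'M[C]_(m, n)) (B : 'M[C]_(n, p)) :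
  adjmx (A *m B) = adjmx B *m adjmx A.
Proof. by rewrite /adjmx /entryconj map_mxM trmx_mul. Qed.

Lemma adjmxK (C : numClosedFieldType) m n (A : 'M[C]_(m, n)) : adjmx (adjmx A) = A.
Proof. by apply/matrixP => i j; rewrite !adjmxE conjCK. Qed.

Lemma adjmxD (C : numClosedFieldType) m n (A B : 'M[C]_(m, n)) :
  adjmx (A + B) = adjmx A + adjmx B.
Proof. apply/matrixP => i j. by rewrite /adjmx /entryconj !mxE rmorphD. Qed.

Lemma adjmxZ (C : numClosedFieldType) m n (c : C) (A : 'M[C]_(m, n)) :
  adjmx (c *: A) = c^* *: adjmx A.
Proof. by apply/matrixP => i j; rewrite /adjmx /entryconj !mxE rmorphM. Qed.

Lemma adjmx_sum (C : numClosedFieldType) m n (I : finType) (F : I -> 'M[C]_(m, n)) :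
  adjmx (\sum_i F i) = \sum_i adjmx (F i).
Proof. by apply/matrixP => i j; rewrite adjmxE !summxE rmorph_sum; apply: eq_bigr => k _; rewrite adjmxE. Qed.

Definition qf (C : numClosedFieldType) m n (x : 'cV[C]_m) (A : 'M[C]_(m, n)) (y : 'cV[C]_n) : C :=
  (adjmx x *m A *m y) 0 0.

Lemma qfE (C : numClosedFieldType) m n (x : 'cV[C]_m) (A : 'M[C]_(m, n)) (y : 'cV[C]_n) :
  qf x A y = \sum_i \sum_j (x i 0)^* * A i j * y j 0.
Proof.
rewrite /qf mxE exchange_big /=; apply: eq_bigr => j _.
by rewrite mxE mulr_suml; apply: eq_bigr => i _; rewrite adjmxE.
Qed.

Lemma qfMl (C : numClosedFieldType) m n p (x : 'cV[C]_m) (A : 'M[C]_(m, n)) (B : 'M[C]_(n,p)) y :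
  qf x (A *m B) y = qf (adjmx A *m x) B y.
Proof. by rewrite /qf adjmxM adjmxK !mulmxA. Qed.

Lemma qfMr (C : numClosedFieldType) m n p (x : 'cV[C]_m) (A : 'M[C]_(m, n)) (B : 'M[C]_(n,p)) y :
  qf x (A *m B) y = qf x A (B *m y).
Proof. by rewrite /qf !mulmxA. Qed.
Definition blk (C : numClosedFieldType) k n (v : 'cV[C]_(k * n)) (i : 'I_k) : 'cV[C]_n :=
  \col_a v (mxtens_index (i, a)) 0.

Lemma sum_tens (C : numClosedFieldType) k n (F : 'I_(k * n) -> C) :
  \sum_r F r = \sum_i \sum_a F (mxtens_index (i, a)).
Proof.
rewrite pair_big /= (reindex (@mxtens_index k n)) /=; last first.
  by exists (@mxtens_unindex k n) => x _; rewrite (mxtens_indexK, mxtens_unindexK).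
by apply: eq_bigr => -[i a] _.
Qed.

Lemma qf_gen (C : numClosedFieldType) k n (v w : 'cV[C]_(k * n)) (X : 'M[C]_(k * n)) :
  qf v X w = \sum_i \sum_j qf (blk v i) (blockmx X i j) (blk w j).
Proof.
rewrite qfE sum_tens; under eq_bigr => i _ do under eq_bigr => a _ do rewrite sum_tens.
apply: eq_bigr => i _; rewrite exchange_big; apply: eq_bigr => j _.
rewrite qfE; apply: eq_bigr => a _; apply: eq_bigr => b _.
by rewrite /blk /blockmx !mxE.
Qed.

Lemma blk_ampl (C : numClosedFieldType) k n (Y : 'I_k -> 'I_k -> 'M[C]_n) i' j' :
  blockmx (\sum_i \sum_j delta_mx i j *t Y i j) i' j' = Y i' j'.
Proof.
apply/matrixP => a b; rewrite /blockmx mxE summxE (bigD1 i') //= summxE (bigD1 j') //=.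
rewrite tensmxE !mxE !eqxx mul1r big1 ?addr0; last first.
  by move=> j /negbTE hj; rewrite tensmxE mxE eqxx [j' == j]eq_sym hj mul0r.
rewrite big1 ?addr0 // => i /negbTE hi; rewrite summxE big1 // => j _.
by rewrite tensmxE mxE [i' == i]eq_sym hi mul0r.
Qed.

Lemma qf_suml (C : numClosedFieldType) m n (I : finType) (x : I -> 'cV[C]_m) (A : 'M[C]_(m, n)) y :
  qf (\sum_i x i) A y = \sum_i qf (x i) A y.
Proof. by rewrite /qf adjmx_sum !mulmx_suml summxE. Qed.

Lemma qf_sumr (C : numClosedFieldType) m n (I : finType) x (A : 'M[C]_(m, n)) (y : I -> 'cV[C]_n) :
  qf x A (\sum_i y i) = \sum_i qf x A (y i).
Proof. by rewrite /qf mulmx_sumr summxE. Qed.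

Lemma qf_sumA (C : numClosedFieldType) m n (I : finType) x (A : I -> 'M[C]_(m, n)) y :
  qf x (\sum_i A i) y = \sum_i qf x (A i) y.
Proof. by rewrite /qf mulmx_sumr mulmx_suml summxE. Qed.

Lemma qfZl (C : numClosedFieldType) m n (c : C) (x : 'cV[C]_m) (A : 'M[C]_(m, n)) y :
  qf (c *: x) A y = c^* * qf x A y.
Proof. by rewrite /qf adjmxZ -!scalemxAl mxE. Qed.

Lemma qfZr (C : numClosedFieldType) m n (c : C) (x : 'cV[C]_m) (A : 'M[C]_(m, n)) y :
  qf x A (c *: y) = c * qf x A y.
Proof. by rewrite /qf -!scalemxAr mxE. Qed.

Lemma qfZA (C : numClosedFieldType) m n (c : C) (x : 'cV[C]_m) (A : 'M[C]_(m, n)) y :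
  qf x (c *: A) y = c * qf x A y.
Proof. by rewrite /qf -scalemxAr -scalemxAl mxE. Qed.

Lemma qfDl (C : numClosedFieldType) m n (x1 x2 : 'cV[C]_m) (A : 'M[C]_(m, n)) y :
  qf (x1 + x2) A y = qf x1 A y + qf x2 A y.
Proof. by rewrite /qf adjmxD !mulmxDl mxE. Qed.

Lemma qfDr (C : numClosedFieldType) m n (x : 'cV[C]_m) (A : 'M[C]_(m, n)) y1 y2 :
  qf x A (y1 + y2) = qf x A y1 + qf x A y2.
Proof. by rewrite /qf !mulmxDr mxE. Qed.

Lemma psd_E (C : numClosedFieldType) n m (E : 'M[C]_n -> 'M[C]_m) (rho : 'M[C]_n) :
  completely_positive E -> psdmx rho -> psdmx (E rho).
Proof.
move=> hE hr w.
pose X1 : 'M[C]_(1 * n) := \matrix_(r, s) rho (mxtens_unindex r).2 (mxtens_unindex s).2.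
have hX1 i j : blockmx X1 i j = rho.
  by apply/matrixP => a b; rewrite /blockmx !mxE !mxtens_indexK.
have pX1 : psdmx X1.
  move=> v; rewrite -/(qf v X1 v) qf_gen !big_ord1 hX1; exact: hr.
pose w' : 'cV[C]_(1 * m) := \col_r w (mxtens_unindex r).2 0.
have := hE 1%N X1 pX1 w'; rewrite -/(qf _ _ _) qf_gen !big_ord1 /ampliate blk_ampl hX1.
have -> : blk w' 0 = w by apply/matrixP => a b; rewrite /blk !mxE mxtens_indexK ord1.
by [].
Qed.

Definition Pk (C : numClosedFieldType) d a (k : 'I_d) : 'M[C]_(d * a) :=
  delta_mx k k *t (1%:M : 'M[C]_a).

Arguments Pk {C d} a k.

Definition qc (C : numClosedFieldType) d (B : 'I_d -> 'I_d -> 'M[C]_d) (V W : 'M[C]_d) : C :=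
  \sum_k \sum_l qf (col k V) (B k l) (col l W).

Lemma Qpos (C : numClosedFieldType) d a (D : 'M[C]_(d * a) -> 'M[C]_d) (M : 'M[C]_(d * a)) :
  completely_positive D -> psdmx M ->
  forall W, 0 <= qc (fun k l => D (Pk a k *m M *m adjmx (Pk a l))) W W.
Proof.
move=> hD hM W.
pose X : 'M[C]_(d * (d * a)) :=
  \sum_k \sum_l delta_mx k l *t (Pk a k *m M *m adjmx (Pk a l)).
have pX : psdmx X.
  move=> v; rewrite -/(qf v X v) qf_gen.
  under eq_bigr => k _ do under eq_bigr => l _ do rewrite blk_ampl qfMr qfMl.
  set s := \sum_k adjmx (Pk a k) *m blk v k.
  have -> : \sum_k \sum_l qf (adjmx (Pk a k) *m blk v k) M (adjmx (Pk a l) *m blk v l) = qf s M s.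
    by rewrite qf_suml; apply: eq_bigr => k _; rewrite qf_sumr.
  exact: hM.
pose v : 'cV[C]_(d * d) := \col_r W (mxtens_unindex r).2 (mxtens_unindex r).1.
have := hD d X pX v; rewrite -/(qf _ _ _) qf_gen /qc.
have hb k : blk v k = col k W by apply/matrixP => i j; rewrite /blk !mxE mxtens_indexK.
by under eq_bigr => k _ do under eq_bigr => l _ do rewrite /ampliate blk_ampl blk_ampl !hb.
Qed.

Lemma colD' (C : numClosedFieldType) d (k : 'I_d) (V W : 'M[C]_d) : col k (V + W) = col k V + col k W.
Proof. by apply/matrixP => i j; rewrite !mxE. Qed.
Lemma colZ' (C : numClosedFieldType) d (k : 'I_d) c (V : 'M[C]_d) : col k (c *: V) = c *: col k V.
Proof. by apply/matrixP => i j; rewrite !mxE. Qed.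

Section QC.
End QC.

Lemma qcDl (C : numClosedFieldType) d (B : 'I_d -> 'I_d -> 'M[C]_d) V1 V2 W :
  qc B (V1 + V2) W = qc B V1 W + qc B V2 W.
Proof.
rewrite /qc -big_split; apply: eq_bigr => k _; rewrite -big_split; apply: eq_bigr => l _.
by rewrite colD' qfDl.
Qed.
Lemma qcDr (C : numClosedFieldType) d (B : 'I_d -> 'I_d -> 'M[C]_d) V W1 W2 :
  qc B V (W1 + W2) = qc B V W1 + qc B V W2.
Proof.
rewrite /qc -big_split; apply: eq_bigr => k _; rewrite -big_split; apply: eq_bigr => l _.
by rewrite colD' qfDr.
Qed.
Lemma qcZl (C : numClosedFieldType) d (B : 'I_d -> 'I_d -> 'M[C]_d) c V W :
  qc B (c *: V) W = c^* * qc B V W.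
Proof.
rewrite /qc mulr_sumr; apply: eq_bigr => k _; rewrite mulr_sumr; apply: eq_bigr => l _.
by rewrite colZ' qfZl.
Qed.
Lemma qcZr (C : numClosedFieldType) d (B : 'I_d -> 'I_d -> 'M[C]_d) c V W :
  qc B V (c *: W) = c * qc B V W.
Proof.
rewrite /qc mulr_sumr; apply: eq_bigr => k _; rewrite mulr_sumr; apply: eq_bigr => l _.
by rewrite colZ' qfZr.
Qed.

Definition Z0 (C : numClosedFieldType) d (B : 'I_d -> 'I_d -> 'M[C]_d) W := qc B W W = 0.

Lemma Z0_0 (C : numClosedFieldType) d (B : 'I_d -> 'I_d -> 'M[C]_d) : Z0 B 0.
Proof. by rewrite /Z0 -(scale0r (0 : 'M[C]_d)) qcZl conjC0 mul0r. Qed.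

Lemma Z0Z (C : numClosedFieldType) d (B : 'I_d -> 'I_d -> 'M[C]_d) c V :
  Z0 B V -> Z0 B (c *: V).
Proof. by rewrite /Z0 qcZl qcZr => ->; rewrite !mulr0. Qed.

Lemma Z0Zinv (C : numClosedFieldType) d (B : 'I_d -> 'I_d -> 'M[C]_d) c V :
  c != 0 -> Z0 B (c *: V) -> Z0 B V.
Proof.
move=> c0 /(Z0Z (c^-1)); by rewrite scalerA mulVf // scale1r.
Qed.

Lemma Z0D (C : numClosedFieldType) d (B : 'I_d -> 'I_d -> 'M[C]_d) V W :
  (forall X, 0 <= qc B X X) -> Z0 B V -> Z0 B W -> Z0 B (V + W).
Proof.
rewrite /Z0 => hpos hV hW.
have e1 : qc B (V + W) (V + W) = qc B V W + qc B W V.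
  by rewrite !qcDl !qcDr hV hW add0r addr0.
have e2 : qc B (V + (-1) *: W) (V + (-1) *: W) = - (qc B V W + qc B W V).
  rewrite !qcDl !qcDr !qcZl !qcZr hV hW rmorphN1; ring.
have h1 := hpos (V + W); have h2 := hpos (V + (-1) *: W).
rewrite e1; apply/eqP; rewrite eq_le -oppr_ge0 -e2 h2 /=.
by rewrite -e1.
Qed.

Lemma Z0lin (C : numClosedFieldType) d (B : 'I_d -> 'I_d -> 'M[C]_d) a b V W :
  (forall X, 0 <= qc B X X) -> Z0 B V -> Z0 B W -> Z0 B (a *: V + b *: W).
Proof. by move=> hp hV hW; apply: Z0D => //; apply: Z0Z. Qed.

Lemma Z0sum (C : numClosedFieldType) d (B : 'I_d -> 'I_d -> 'M[C]_d) (I : finType) (P : pred I) F :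
  (forall X, 0 <= qc B X X) -> (forall i, P i -> Z0 B (F i)) -> Z0 B (\sum_(i | P i) F i).
Proof.
move=> hp hF; apply: (big_ind (Z0 B)) => //; first exact: Z0_0.
by move=> x y; apply: Z0D.
Qed.

Lemma lin0 (C : numClosedFieldType) m n (D : 'M[C]_m -> 'M[C]_n) : linear D -> D 0 = 0.
Proof.
move=> hl; have h := hl 1 0 0; rewrite !scale1r addr0 in h.
by apply: (@addrI _ (D 0)); rewrite addr0 -h.
Qed.

Lemma linD (C : numClosedFieldType) m n (D : 'M[C]_m -> 'M[C]_n) : linear D ->
  forall x y, D (x + y) = D x + D y.
Proof. by move=> hl x y; have := hl 1 x y; rewrite !scale1r. Qed.

Lemma linZ (C : numClosedFieldType) m n (D : 'M[C]_m -> 'M[C]_n) : linear D ->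
  forall c x, D (c *: x) = c *: D x.
Proof. by move=> hl c x; have := hl c x 0; rewrite !addr0 lin0 // addr0. Qed.

Lemma lin_sum (C : numClosedFieldType) m n (D : 'M[C]_m -> 'M[C]_n) (I : finType) (F : I -> 'M[C]_m) :
  linear D -> D (\sum_i F i) = \sum_i D (F i).
Proof. by move=> hl; apply: (big_morph D (linD hl) (lin0 hl)). Qed.

Lemma tensmxZl (C : numClosedFieldType) m n p q c (A : 'M[C]_(m, n)) (B : 'M[C]_(p, q)) :
  (c *: A) *t B = c *: (A *t B).
Proof. by apply/matrixP => r s; rewrite !mxE mulrA. Qed.

Lemma tensmx_suml (C : numClosedFieldType) m n p q (I : finType) (F : I -> 'M[C]_(m, n)) (B : 'M[C]_(p, q)) :
  (\sum_i F i) *t B = \sum_i (F i *t B).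
Proof.
apply/matrixP => r s; rewrite summxE !mxE summxE mulr_suml.
by apply: eq_bigr => i _; rewrite !mxE.
Qed.

Lemma colM (C : numClosedFieldType) d (y : 'cV[C]_d) (u : 'rV[C]_d) k :
  col k (y *m u) = u 0 k *: y.
Proof. by apply/matrixP => i j; rewrite !mxE big_ord1 (ord1 j) mulrC. Qed.

Lemma out_expand (C : numClosedFieldType) d a (D : 'M[C]_(d * a) -> 'M[C]_d) (M : 'M[C]_(d * a))
  (u : 'rV[C]_d) (y : 'cV[C]_d) : linear D ->
  let U := diag_mx (map_mx Num.conj u) in
  qf y (D ((U *t (1%:M : 'M[C]_a)) *m M *m adjmx (U *t (1%:M : 'M[C]_a)))) y =
  qc (fun k l => D (Pk a k *m M *m adjmx (Pk a l))) (y *m u) (y *m u).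
Proof.
move=> hl U.
have hU : U *t (1%:M : 'M[C]_a) = \sum_k (u 0 k)^* *: Pk a k.
  rewrite /U diag_mx_sum_delta tensmx_suml; apply: eq_bigr => k _.
  by rewrite tensmxZl mxE.
rewrite hU adjmx_sum !mulmx_suml lin_sum // qf_sumA /qc; apply: eq_bigr => k _.
rewrite mulmx_sumr lin_sum // qf_sumA; apply: eq_bigr => l _.
rewrite adjmxZ conjCK -!scalemxAl -scalemxAr scalerA !linZ // qfZA !colM qfZl qfZr.
by rewrite mulrA.
Qed.

Lemma unimod1 (C : numClosedFieldType) : (1 : C)^* * 1 = 1.
Proof. by rewrite conjC1 mulr1. Qed.
Lemma unimodN1 (C : numClosedFieldType) : (-1 : C)^* * -1 = 1.
Proof. by rewrite rmorphN1 mulrNN mulr1. Qed.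
Lemma unimodi (C : numClosedFieldType) : ('i : C)^* * 'i = 1.
Proof. by rewrite conjCi mulNr -expr2 sqrCi opprK. Qed.

Lemma one_neq_m1 (C : numClosedFieldType) : (1 : C) != -1.
Proof.
rewrite -subr_eq0 opprK; apply: lt0r_neq0; exact: addr_gt0 ltr01 ltr01.
Qed.

Lemma chain (C : numClosedFieldType) d (B : 'I_d -> 'I_d -> 'M[C]_d) :
  (3 <= d)%N -> (forall X, 0 <= qc B X X) ->
  (forall (u : 'rV[C]_d) (y : 'cV[C]_d), (forall k, (u 0 k)^* * u 0 k = 1) ->
      \sum_j (y j 0)^* * u 0 j = 0 -> Z0 B (y *m u)) ->
  Z0 B ((const_mx 1 : 'cV[C]_d) *m (const_mx 1 : 'rV[C]_d)).
Proof.
move=> hd hp hZ.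
have o0 : (ord0 == 0 :> 'I_1) = true by [].
pose e (p : 'I_d) : 'cV[C]_d := delta_mx p 0.
pose f (p : 'I_d) : 'rV[C]_d := delta_mx 0 p.
pose oner : 'rV[C]_d := const_mx 1.
have pair p q : p != q -> Z0 B (e p *m f p) /\ Z0 B (e q *m (oner - f p)).
  move=> hpq; have hqp : (q == p) = false by rewrite eq_sym (negbTE hpq).
  pose ut t : 'rV[C]_d := \row_j (if j == p then t else 1).
  pose yt t : 'cV[C]_d := t *: e p - e q.
  pose g t := yt t *m ut t.
  have Zg t : t^* * t = 1 -> Z0 B (g t).
    move=> ht; apply: hZ.
    - by move=> k; rewrite mxE; case: (k == p) => //; rewrite unimod1.
    - rewrite (bigD1 p) //= (bigD1 q) /=; last by rewrite eq_sym.
      rewrite big1 => [|j /andP [hjp hjq]].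
        rewrite !mxE !eqxx (negbTE hpq) hqp /=.
        by rewrite mulr1 mulr0 subr0 sub0r addr0 mulr1 rmorphN1 ht subrr.
      rewrite !mxE (negbTE hjp) (negbTE hjq) /=.
      by rewrite mulr0 subr0 conjC0 mul0r.
  pose h t := e q *m oner - e q *m f p + t *: (e p *m f p).
  have hid t : (t - 1) *: h t = 1 *: g t + (- t) *: g 1.
    apply/matrixP => b c; rewrite !mxE !big_ord1 !mxE ?o0 ?andbT.
    have [->|bp] := eqVneq b p.
      rewrite ?eqxx ?hqp ?(negbTE hpq) /=; case: (c == p) => /=; ring.
    by case: (b == q); case: (c == p); rewrite /=; ring.
  have Zh t : t^* * t = 1 -> t != 1 -> Z0 B (h t).
    move=> ht t1; apply: (@Z0Zinv _ _ _ (t - 1)); first by rewrite subr_eq0.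
    by rewrite hid; apply: Z0lin => //; apply: Zg => //; rewrite unimod1.
  have ZP : Z0 B (e p *m f p).
    apply: (@Z0Zinv _ _ _ (-1 - 'i)).
      rewrite subr_eq0; apply/eqP => hi.
      have := sqrCi C; rewrite -hi sqrrN expr1n => /eqP; apply/negP; exact: one_neq_m1.
    have -> : (-1 - 'i) *: (e p *m f p) = 1 *: h (-1) + (-1) *: h 'i.
      by apply/matrixP => b c; rewrite !mxE !big_ord1 !mxE ?o0 ?andbT; ring.
    apply: Z0lin => //; apply: Zh.
    - exact: unimodN1.
    - by rewrite eq_sym one_neq_m1.
    - exact: unimodi.
    - apply/eqP => hi; have := sqrCi C; rewrite hi expr1n => /eqP; apply/negP; exact: one_neq_m1.
  split => //.
  have -> : e q *m (oner - f p) = 1 *: h (-1) + 1 *: (e p *m f p).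
    by apply/matrixP => b c; rewrite !mxE !big_ord1 !mxE ?o0 ?andbT; ring.
  apply: Z0lin => //; apply: Zh.
  - exact: unimodN1.
  - by rewrite eq_sym one_neq_m1.
have d1 : (1 < d)%N by apply: leq_trans hd.
have d0 : (0 < d)%N by apply: leq_trans hd.
have other q : exists q' : 'I_d, q' != q.
  case: (eqVneq (nat_of_ord q) 0%N) => hq.
    by exists (Ordinal d1); apply/eqP => /(congr1 val) /=; rewrite hq.
  by exists (Ordinal d0); apply/eqP => /(congr1 val) /= h0; rewrite -h0 in hq.
have Zdiag q : Z0 B (e q *m f q).
  by have [q' hq'] := other q; have [] := pair q q'; rewrite // eq_sym.
have hs : \sum_r f r = oner.
  by rewrite [oner]row_sum_delta; apply: eq_bigr => r _; rewrite mxE scale1r.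
have Zrow q : Z0 B (e q *m oner).
  have hd2 : (d - 2)%:R != 0 :> C by rewrite pnatr_eq0 subn_eq0 -ltnNge.
  apply: (@Z0Zinv _ _ _ (d - 2)%:R) => //.
  have -> : (d - 2)%:R *: (e q *m oner) =
      \sum_(r | r != q) (e q *m (oner - f r)) + (-1) *: (e q *m f q).
    rewrite -mulmx_sumr scaleN1r -mulmxN -mulmxDr scalemxAr; congr (_ *m _).
    have hT : \sum_r (oner - f r) = oner *+ d - oner.
      by rewrite sumrB hs sumr_const card_ord.
    rewrite (bigD1 q) //= in hT.
    have -> : \sum_(r | r != q) (oner - f r) = oner *+ d - oner - (oner - f q).
      by rewrite -hT addrC addrK.
    rewrite scaler_nat mulrnBr // mulr2n opprD addrA -[in RHS]addrA.
    by move: (oner *+ d) (f q) => X Y; apply/rowP => j; rewrite !mxE; ring.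
  apply: Z0D => //; last exact: Z0Z.
  apply: Z0sum => // r hr; have [] := pair r q hr => //.
have -> : (const_mx 1 : 'cV[C]_d) *m (const_mx 1 : 'rV[C]_d) = \sum_q e q *m oner.
  rewrite -mulmx_suml; congr (_ *m _); apply/matrixP => i j.
  rewrite summxE (bigD1 i) //= big1 => [|k hk]; rewrite !mxE ?eqxx ?(ord1 j) ?o0 ?addr0 //.
  by rewrite [i == k]eq_sym (negbTE hk).
by apply: Z0sum.
Qed.

Lemma qf_rank1 (C : numClosedFieldType) n (v x : 'cV[C]_n) :
  qf v (x *m adjmx x) v = (adjmx v *m x) 0 0 * ((adjmx v *m x) 0 0)^*.
Proof.
rewrite /qf mulmxA -mulmxA.
have -> : adjmx x *m v = adjmx (adjmx v *m x) by rewrite adjmxM adjmxK.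
by rewrite mxE big_ord1 adjmxE.
Qed.

Lemma adj_diag (C : numClosedFieldType) d (u : 'rV[C]_d) :
  adjmx (diag_mx u) = diag_mx (map_mx Num.conj u).
Proof.
apply/matrixP => i j; rewrite adjmxE !mxE rmorphMn eq_sym.
by have [->|hij] := eqVneq j i.
Qed.

Lemma diag_mul (C : numClosedFieldType) d (x y : 'rV[C]_d) :
  diag_mx x *m diag_mx y = diag_mx (\row_k (x 0 k * y 0 k)).
Proof. by apply/matrixP => i j; rewrite mul_diag_mx !mxE mulrnAr. Qed.

Lemma diag_unimod (C : numClosedFieldType) d (u : 'rV[C]_d) :
  (forall k, (u 0 k)^* * u 0 k = 1) ->
  adjmx (diag_mx u) *m diag_mx u = 1%:M /\ diag_mx u *m adjmx (diag_mx u) = 1%:M.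
Proof.
move=> hu; rewrite adj_diag !diag_mul; split; apply/matrixP => i j; rewrite !mxE ?hu //.
by rewrite mulrC hu.
Qed.

Lemma sE (C : numClosedFieldType) d (u : 'rV[C]_d) (y : 'cV[C]_d) :
  (adjmx y *m (diag_mx u *m (const_mx 1 : 'cV[C]_d))) 0 0 = \sum_j (y j 0)^* * u 0 j.
Proof.
rewrite mul_diag_mx mxE; apply: eq_bigr => j _; by rewrite adjmxE !mxE mulr1.
Qed.

Lemma main (C : numClosedFieldType) d a (E : 'M[C]_d -> 'M[C]_(d * a))
  (D : 'M[C]_(d * a) -> 'M[C]_d) (e : C) :
  (3 <= d)%N -> 0 < e -> cptni E -> cptni D ->
  (forall (U rho : 'M[C]_d), U \is unitarymx -> density rho ->
        let out := D ((U *t (1%:M : 'M[C]_a)) *m E rho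
                        *m adjmx (U *t (1%:M : 'M[C]_a))) in
        (e <= \tr out) /\
        exists c : C, out = c *: (entryconj U *m rho *m adjmx (entryconj U))) -> False.
Proof.
move=> hd he [hlE cpE _] [hlD cpD _] H.
pose onec : 'cV[C]_d := const_mx 1.
have dC : (d%:R : C) != 0 by rewrite pnatr_eq0 -lt0n (leq_trans _ hd).
pose rho := (d%:R)^-1 *: (onec *m adjmx onec).
have hrho : density rho.
  split.
    move=> v; rewrite -/(qf v rho v) qfZA qf_rank1; apply: mulr_ge0.
      by rewrite invr_ge0 ler0n.
    exact: mul_conjC_ge0.
  rewrite mxtraceZ mxtrace_mulC /mxtrace big_ord1 mxE.
  under eq_bigr do rewrite adjmxE !mxE conjC1 mulr1.
  by rewrite sumr_const card_ord mulVf.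
pose M := E rho.
have hM : psdmx M := psd_E cpE hrho.1.
pose B k l := D (Pk a k *m M *m adjmx (Pk a l)).
have hpos : forall W, 0 <= qc B W W := Qpos cpD hM.
have gen : forall (u : 'rV[C]_d) (y : 'cV[C]_d), (forall k, (u 0 k)^* * u 0 k = 1) ->
    exists c, e <= c /\ qc B (y *m u) (y *m u) =
      c * (d%:R)^-1 * ((\sum_j (y j 0)^* * u 0 j) * (\sum_j (y j 0)^* * u 0 j)^*).
  move=> u y hu.
  pose U := diag_mx (map_mx Num.conj u).
  have [hu1 hu2] := diag_unimod hu.
  have hUu : U \is unitarymx.
    apply/unitarymxP.
    have -> : map_mx Num.conj (U^T) = adjmx U by apply/matrixP => i j; rewrite adjmxE !mxE.
    have hu' : forall k, ((map_mx Num.conj u) 0 k)^* * (map_mx Num.conj u) 0 k = 1.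
      by move=> k; rewrite !mxE; have := congr1 Num.conj (hu k); rewrite rmorphM conjC1.
    by have [_ ->] := diag_unimod hu'.
  move: (H U rho hUu hrho) => /= [hle [c hc]].
  have eU : entryconj U = diag_mx u.
    rewrite /entryconj /U map_diag_mx; congr diag_mx.
    by apply/matrixP => i j; rewrite !mxE; apply: conjCK.
  rewrite eU in hc.
  exists c; split.
    move: hle; rewrite hc mxtraceZ mxtrace_mulC mulmxA hu1 mul1mx.
    by rewrite hrho.2 mulr1.
  have := out_expand M u y hlD; rewrite /= => <-.
  rewrite hc qfZA /rho -scalemxAr -scalemxAl qfZA mulrA.
  rewrite mulmxA -[(_ *m adjmx onec) *m _]mulmxA -adjmxM qf_rank1.
  by rewrite sE.
have hZ : forall (u : 'rV[C]_d) (y : 'cV[C]_d), (forall k, (u 0 k)^* * u 0 k = 1) ->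
    \sum_j (y j 0)^* * u 0 j = 0 -> Z0 B (y *m u).
  move=> u y hu hs; rewrite /Z0; have [c [_ ->]] := gen u y hu.
  by rewrite hs mul0r mulr0.
have := chain hd hpos hZ.
have hu1 : forall k, ((const_mx 1 : 'rV[C]_d) 0 k)^* * (const_mx 1 : 'rV[C]_d) 0 k = 1.
  by move=> k; rewrite mxE unimod1.
have [c [hc1 hc2]] := gen (const_mx 1) (const_mx 1) hu1.
rewrite /Z0 hc2.
under eq_bigr do rewrite !mxE conjC1 mulr1.
rewrite sumr_const card_ord conjC_nat -mulrA mulKf // => /eqP.
rewrite mulf_eq0 (negbTE dC) orbF => /eqP c0.
by move: hc1; rewrite c0 => /(lt_le_trans he); rewrite ltxx.
Qed.

Unset Implicit Arguments.
Unset Strict Implicit.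

Theorem theorem2 (R : realType) (d : nat) : (3 <= d)%N ->
  ~ exists (eps : R) (a : nat)
      (E : 'M[R[i]]_d -> 'M[R[i]]_(d * a))
      (D : 'M[R[i]]_(d * a) -> 'M[R[i]]_d),
    [/\ 0 < eps, cptni E, cptni D &
      forall (U rho : 'M[R[i]]_d), U \is unitarymx -> density rho ->
        let out := D ((U *t (1%:M : 'M[R[i]]_a)) *m E rho
                        *m adjmx (U *t (1%:M : 'M[R[i]]_a))) in
        ((eps%:C)%C <= \tr out) /\
        exists c : R[i], out = c *: (entryconj U *m rho *m adjmx (entryconj U))].
Proof.
move=> hd [eps [a [E [D [heps hE hD H]]]]].
apply: (@main _ d a E D (eps%:C)%C hd _ hE hD H).
have h : ((0 : R)%:C < eps%:C)%C by rewrite ltcR.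
exact: h.
Qed.
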